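(* Let $0<\varepsilon<1$ be arbitrary and let $n$ be a sufficiently large positive integer. Let $d=4\log n$, $m=n^2 2^d$, and sample $\mathcal{F}\sim\mathcal{F}(m,n,d)$. Then with high probability, every set $S$ of clauses of $\mathcal{F}$ of size $s\le n/(e d^2)$ satisfies $|\mathrm{vars}(S)|\ge(1-\varepsilon)ds$.
   Context: $\log$ is base 2. $\mathcal{F}(m,n,d)$: random $d$-CNF on $n$ variables with $m$ clauses sampled independently and uniformly with replacement from the $\binom{n}{d}2^d$ clauses on $d$ distinct variables. For a set $S$ of clauses, $\mathrm{vars}(S)$ is the set of variables appearing in some clause of $S$. ''With high probability'' means with probability tending to $1$ as $n\to\infty$. *)

(* Defs.v *)
From Stdlib Require Import Reals ClassicalEpsilon.
From mathcomp Require Import all_boot.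
Set Implicit Arguments. Unset Strict Implicit. Unset Printing Implicit Defensive.

Definition lit (n : nat) := ('I_n * bool)%type.

(* A d-clause on d distinct variables: a set of d literals, no variable twice
   (so there are exactly 'C(n,d) * 2^d of them). *)
Definition is_clause (n d : nat) (C : {set lit n}) : bool :=
  (#|C| == d) &&
  [forall x : 'I_n, ~~ (((x, true) \in C) && ((x, false) \in C))].

(* A formula with m clauses sampled independently with replacement is an
   m-indexed family of clauses; the sample space of F(m,n,d), with the uniform
   distribution, is the set of all such families. *)
Definition formulas (m n d : nat) : {set {ffun 'I_m -> {set lit n}}} :=
  [set F : {ffun 'I_m -> {set lit n}} | [forall i, is_clause d (F i)]].

Definition vars (m n : nat) (F : {ffun 'I_m -> {set lit n}}) (S : {set 'I_m})
  : {set 'I_n} := [set l.1 | l in \bigcup_(i in S) F i].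

(* d = 4 log2 n, rounded down: floor(log2 (n^4)) *)
Definition dd (n : nat) : nat := trunc_log 2 (n ^ 4).
Definition mm (n : nat) : nat := n ^ 2 * 2 ^ dd n.

Definition expanding (eps : R) (m n d : nat) (F : {ffun 'I_m -> {set lit n}}) : Prop :=
  forall S : {set 'I_m},
    Rle (INR #|S|) (Rdiv (INR n) (Rmult (exp 1) (pow (INR d) 2))) ->
    Rle (Rmult (Rmult (Rminus 1 eps) (INR d)) (INR #|S|)) (INR #|vars F S|).

Definition pb (P : Prop) : bool :=
  if excluded_middle_informative P then true else false.

Definition prob_expanding (eps : R) (m n d : nat) : R :=
  Rdiv (INR #|[set F in formulas m n d | pb (expanding eps d F) ]|)
       (INR #|formulas m n d|).

(* Main.v *)
Require Import Defs.
From Stdlib Require Import Reals.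
From mathcomp Require Import all_boot.
From Stdlib Require Import Lra Lia Classical ClassicalEpsilon.
From mathcomp Require Import zify.
From HB Require Import structures.
Delimit Scope R_scope with R.

Lemma Rplus_0_l' : left_id R0 Rplus. Proof. move=> x; exact: Rplus_0_l. Qed.
Lemma Rplus_assoc' : associative Rplus. Proof. move=> x y z; by rewrite Rplus_assoc. Qed.
Lemma Rplus_comm' : commutative Rplus. Proof. exact: Rplus_comm. Qed.
HB.instance Definition _ := Monoid.isComLaw.Build R R0 Rplus Rplus_assoc' Rplus_comm' Rplus_0_l'.

Lemma INR_addn a b : INR (a + b) = (INR a + INR b)%R.
Proof. by rewrite addnE plus_INR. Qed.
Lemma INR_muln a b : INR (a * b) = (INR a * INR b)%R.
Proof. by rewrite mulnE mult_INR. Qed.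
Lemma INR_expn a k : INR (a ^ k) = (INR a ^ k)%R.
Proof. elim: k => [|k IH]; first by rewrite expn0. by rewrite expnS INR_muln IH. Qed.
Lemma INR_subn a b : (b <= a)%N -> INR (a - b) = (INR a - INR b)%R.
Proof. move=> h; rewrite subnE minus_INR //; apply/leP. exact h. Qed.
Lemma leINR a b : (a <= b)%N -> (INR a <= INR b)%R.
Proof. move/leP; exact: le_INR. Qed.
Lemma INRle a b : (INR a <= INR b)%R -> (a <= b)%N.
Proof. move/INR_le; by move/leP. Qed.

Lemma INR_sum I r (P : pred I) (f : I -> nat) :
  INR (\sum_(i <- r | P i) f i) = \big[Rplus/R0]_(i <- r | P i) INR (f i).
Proof. apply: (big_morph INR INR_addn). by []. Qed.

Lemma Rsum_le I r (P : pred I) (f g : I -> R) :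
  (forall i, P i -> f i <= g i)%R ->
  (\big[Rplus/R0]_(i <- r | P i) f i <= \big[Rplus/R0]_(i <- r | P i) g i)%R.
Proof.
move=> H; apply: (big_ind2 (fun a b => a <= b)%R) => //; first exact: Rle_refl.
by move=> *; apply: Rplus_le_compat.
Qed.

Lemma Rsum_ge0 I r (P : pred I) (f : I -> R) :
  (forall i, 0 <= f i)%R -> (0 <= \big[Rplus/R0]_(i <- r | P i) f i)%R.
Proof.
move=> H; apply: (big_ind (fun a => 0 <= a)%R) => //; first exact: Rle_refl.
by move=> *; lra.
Qed.

Lemma Rsum_cond_le I r (P : pred I) (f : I -> R) :
  (forall i, 0 <= f i)%R ->
  (\big[Rplus/R0]_(i <- r | P i) f i <= \big[Rplus/R0]_(i <- r) f i)%R.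
Proof.
move=> H; rewrite big_mkcond; apply: Rsum_le => i _; case: (P i) => //; exact: Rle_refl.
Qed.

Lemma Rsum_scal I r (P : pred I) (f : I -> R) c :
  \big[Rplus/R0]_(i <- r | P i) (c * f i)%R = (c * \big[Rplus/R0]_(i <- r | P i) f i)%R.
Proof. symmetry; apply: (big_morph (Rmult c)); [move=> x y; lra | lra]. Qed.

Lemma big_ord_recrR k (F : nat -> R) :
  \big[Rplus/R0]_(i < k.+1) F i = (\big[Rplus/R0]_(i < k) F i + F k)%R.
Proof. exact: big_ord_recr. Qed.

Lemma Rsum_const k c : \big[Rplus/R0]_(i < k) c = (INR k * c)%R.
Proof.
elim: k => [|k IH]; first by rewrite big_ord0 /=; lra.
by rewrite big_ord_recrR IH S_INR; ring.
Qed.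

Lemma geom_bound (x : R) M : (0 <= x)%R -> (x <= 1/2)%R ->
  (\big[Rplus/R0]_(s < M) (if (s:nat) == 0%N then 0 else x ^ s) <= 2 * x)%R.
Proof.
move=> h0 h1; case: M => [|k]; first by rewrite big_ord0; lra.
suff H : (\big[Rplus/R0]_(s < k.+1) (if (s:nat) == 0%N then 0 else x ^ s) + 2 * x ^ k.+1 <= 2 * x)%R.
  have : (0 <= x ^ k.+1)%R by apply: pow_le. lra.
elim: k => [|k IH].
  rewrite (big_ord_recrR _ (fun s => if s == 0%N then 0 else x ^ s)%R) big_ord0 /=; lra.
rewrite (big_ord_recrR _ (fun s => if s == 0%N then 0 else x ^ s)%R) /=.
have hp : (0 <= x ^ k.+1)%R by apply: pow_le.
have e : (x ^ k.+2 = x * x ^ k.+1)%R by [].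
move: IH hp; rewrite /= => IH hp. nra.
Qed.

Lemma exp_pow a k : (exp a ^ k = exp (INR k * a))%R.
Proof.
elim: k => [|k IH]; first by rewrite /= Rmult_0_l exp_0.
have -> : (exp a ^ k.+1 = exp a * exp a ^ k)%R by [].
rewrite IH -exp_plus S_INR; congr exp; ring.
Qed.

Lemma exp_le a b : (a <= b)%R -> (exp a <= exp b)%R.
Proof. case=> h; [left; exact: exp_increasing | rewrite h; right; done]. Qed.

Lemma ln_le' a b : (0 < a)%R -> (a <= b)%R -> (ln a <= ln b)%R.
Proof. move=> h; case=> h'; [left; exact: ln_increasing | rewrite h'; right; done]. Qed.

Lemma exp1_ge2 : (2 <= exp 1)%R.
Proof. have := exp_ineq1_le 1; lra. Qed.

Lemma pow_fact_exp v : (INR v ^ v <= INR v`! * exp (INR v))%R.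
Proof.
elim: v => [|v IH]; first by rewrite /= exp_0; lra.
have hv : (INR v.+1 ^ v <= INR v ^ v * exp 1)%R.
  case: v IH => [|v] IH; first by rewrite /= ; have := exp1_ge2; lra.
  have hpos : (0 < INR v.+1)%R by apply: lt_0_INR; lia.
  have e1 : (INR v.+2 = INR v.+1 * (1 + / INR v.+1))%R.
    rewrite (S_INR v.+1); field; lra.
  rewrite e1 Rpow_mult_distr; apply: Rmult_le_compat_l; first by apply: pow_le; lra.
  have : (exp (/ INR v.+1) ^ v.+1 = exp 1)%R by rewrite exp_pow; congr exp; field; lra.
  move=> <-; apply: pow_incr; split; first by have := Rinv_0_lt_compat _ hpos; lra.
  exact: exp_ineq1_le.
rewrite factS INR_muln.
have -> : (INR v.+1 ^ v.+1 = INR v.+1 * INR v.+1 ^ v)%R by [].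
rewrite (S_INR v) exp_plus -(S_INR v).
have h0 : (0 <= INR v.+1)%R by apply: pos_INR.
have h1 : (0 <= INR v ^ v)%R by apply: pow_le; apply: pos_INR.
have h2 : (0 < exp 1)%R by apply: exp_pos.
have := Rmult_le_compat_r (exp 1) _ _ (Rlt_le _ _ h2) IH.
move=> H.
apply: (Rle_trans _ (INR v.+1 * (INR v ^ v * exp 1))%R).
  by apply: Rmult_le_compat_l.
have := Rmult_le_compat_l _ _ _ h0 H. lra.
Qed.

Lemma card_fam (aT rT : finType) (G : aT -> {set rT}) :
  #|[set f : {ffun aT -> rT} | [forall x, f x \in G x]]| = \prod_(x : aT) #|G x|.
Proof.
have -> : #|[set f : {ffun aT -> rT} | [forall x, f x \in G x]]| =
          #|(family (fun x => mem (G x)) : simpl_pred _)|.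
  by apply: eq_card => f; rewrite inE; apply/forallP/familyP.
by rewrite card_family foldrE big_map big_enum.
Qed.

Section Count.
Variables (n d : nat).
Definition cl : {set {set lit n}} := [set C | is_clause d C].
Definition clV (V : {set 'I_n}) : {set {set lit n}} :=
  [set C | is_clause d C & [set l.1 | l in C] \subset V].
Definition AS (m : nat) (S : {set 'I_m}) (V : {set 'I_n}) :
  {set {ffun 'I_m -> {set lit n}}} :=
  [set F : {ffun 'I_m -> {set lit n}} | [forall i, F i \in (if i \in S then clV V else cl)]].
Arguments AS {m}.

Lemma card_formulas m : #|formulas m n d| = #|cl| ^ m.
Proof.
have -> : formulas m n d = [set F : {ffun 'I_m -> {set lit n}} | [forall i, F i \in (fun _ => cl) i]].
  by apply/setP => F; rewrite !inE; apply: eq_forallb => i; rewrite inE.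
by rewrite card_fam prod_nat_const card_ord.
Qed.

Lemma card_AS m (S : {set 'I_m}) (V : {set 'I_n}) :
  #|AS S V| * #|cl| ^ #|S| = #|formulas m n d| * #|clV V| ^ #|S|.
Proof.
rewrite card_formulas /AS card_fam (bigID (fun i => i \in S)) /=.
rewrite (eq_bigr (fun _ => #|clV V|)) => [|i ->//].
rewrite [X in _ * X * _](eq_bigr (fun _ => #|cl|)) => [|i /negbTE ->//].
rewrite !prod_nat_const.
set c := #|(fun i : 'I_m => i \notin S)|.
have hc : #|S| + c = m by rewrite /c -[RHS](card_ord m) -(cardC S); congr (_ + _); apply: eq_card.
have -> : #|cl| ^ m = #|cl| ^ #|S| * #|cl| ^ c by rewrite -expnD hc.
move: (#|clV V| ^ #|S|) (#|cl| ^ c) (#|cl| ^ #|S|) => a b e; lia.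
Qed.

Lemma card_clV V : #|clV V| <= 'C(2 * #|V|, d).
Proof.
have -> : 2 * #|V| = #|setX V [set: bool]| by rewrite cardsX cardsT card_bool mulnC.
rewrite -cards_draws; apply: subset_leq_card; apply/subsetP => C.
rewrite !inE /is_clause => /andP[/andP[/eqP hC _] hsub]; rewrite hC eqxx andbT.
apply/subsetP => l lC; rewrite inE; apply/andP; split; last by rewrite inE.
by apply: (subsetP hsub); apply/imsetP; exists l.
Qed.

Lemma card_cl_ge : 'C(n, d) <= #|cl|.
Proof.
pose f (X : {set 'I_n}) : {set lit n} := setX X [set true].
have finj : injective f.
  move=> X Y hXY; apply/setP => x.
  have := congr1 (fun Z : {set lit n} => (x, true) \in Z) hXY; rewrite /f !inE /= !andbT.
  by [].
rewrite -[n in 'C(n, _)]card_ord -card_draws -(card_imset _ finj).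
apply: subset_leq_card; apply/subsetP => C /imsetP[X]; rewrite inE => /eqP hX ->.
rewrite inE /is_clause /f cardsX cards1 muln1 hX eqxx /=.
by apply/forallP => x; rewrite !inE /= !andbF.
Qed.

End Count.
Arguments AS {n d m}.

Lemma expn_le a b k : a <= b -> a ^ k <= b ^ k.
Proof. move=> h; elim: k => [|k IH]; first by rewrite !expn0. by rewrite !expnS leq_mul. Qed.

Lemma ffact_le_pow a k : a ^_ k <= a ^ k.
Proof.
rewrite ffact_prod; apply: (@leq_trans (\prod_(i < k) a)).
  by apply: leq_prod => i _; apply: leq_subr.
by rewrite prod_nat_const card_ord.
Qed.

Lemma pow_le_ffact a k : (a - k) ^ k <= a ^_ k.
Proof.
rewrite ffact_prod; apply: (@leq_trans (\prod_(i < k) (a - k))).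
  by rewrite prod_nat_const card_ord.
apply: leq_prod => i _; have := ltn_ord i; lia.
Qed.

Lemma bin_fact_le a k : 'C(a, k) * k`! <= a ^ k.
Proof. by rewrite bin_ffact ffact_le_pow. Qed.

Lemma bin_le_pow a k : 'C(a, k) <= a ^ k.
Proof.
apply: leq_trans (bin_fact_le a k).
by rewrite -[X in X <= _]muln1 leq_mul2l fact_gt0 orbT.
Qed.

Lemma bin_ratio n d v : 2 * d <= n -> 'C(2 * v, d) * n ^ d <= 'C(n, d) * (4 * v) ^ d.
Proof.
move=> h.
rewrite -(leq_pmul2r (fact_gt0 d)).
have e1 : 'C(2 * v, d) * n ^ d * d`! = ('C(2 * v, d) * d`!) * n ^ d by lia.
have e2 : 'C(n, d) * (4 * v) ^ d * d`! = ('C(n, d) * d`!) * (4 * v) ^ d by lia.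
rewrite e1 e2 !bin_ffact.
apply: (leq_trans (leq_mul (ffact_le_pow _ _) (leqnn _))).
apply: (@leq_trans ((2 * v) ^ d * (2 * (n - d)) ^ d)).
  by apply: leq_mul => //; apply: expn_le; lia.
have -> : (2 * v) ^ d * (2 * (n - d)) ^ d = (4 * v) ^ d * (n - d) ^ d.
  by rewrite -!expnMn; congr (_ ^ _); lia.
by rewrite [X in _ <= X]mulnC; apply: leq_mul => //; exact: pow_le_ffact.
Qed.

Lemma card_AS_bound n d m (S : {set 'I_m}) (V : {set 'I_n}) :
  2 * d <= n ->
  #|AS (n:=n) (d:=d) S V| * n ^ (d * #|S|) <= #|formulas m n d| * (4 * #|V|) ^ (d * #|S|).
Proof.
move=> h.
have hK : 0 < #|cl n d|.
  apply: leq_trans (card_cl_ge n d); rewrite bin_gt0; lia.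
have hKs : 0 < #|cl n d| ^ #|S| by rewrite expn_gt0 hK.
rewrite -(leq_pmul2r hKs).
rewrite mulnAC.
rewrite card_AS -mulnA -mulnA leq_mul2l; apply/orP; right.
rewrite !expnM -!expnMn.
apply: expn_le.
apply: (leq_trans (leq_mul (card_clV _ _ V) (leqnn _))).
apply: (leq_trans (bin_ratio n d #|V| h)).
by rewrite [X in _ <= X]mulnC; apply: leq_mul => //; exact: card_cl_ge.
Qed.

Lemma powM x a b : (x ^ (a * b)%N = (x ^ a) ^ b)%R.
Proof. rewrite mulnE; exact: pow_mult. Qed.
Lemma powD x a b : (x ^ (a + b)%N = x ^ a * x ^ b)%R.
Proof. rewrite addnE; exact: pow_add. Qed.

Lemma INR_ge0 a : (0 <= INR a)%R. Proof. exact: pos_INR. Qed.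

Lemma term_bound (eps : R) (n d m s v : nat) :
  (0 < eps)%R -> (0 < n)%N -> (0 < d)%N -> (0 < s)%N ->
  (INR v < (1 - eps) * INR d * INR s)%R ->
  (INR s <= INR n / (exp 1 * INR d ^ 2))%R ->
  (INR 'C(m, s) * INR 'C(n, v) * (INR (4 * v) / INR n) ^ (d * s) <=
   (INR m * (4 * exp 1) ^ d * exp (- (eps * ln (exp 1 * INR d))) ^ d) ^ s)%R.
Proof.
move=> heps hn hd hs hv hsn.
set N := INR n in hsn *; set D := INR d in hv hsn *; set Vr := INR v in hv *; set Sr := INR s in hv hsn *.
set z := exp (- (eps * ln (exp 1 * D))).
have hN : (0 < N)%R by apply: lt_0_INR; apply/ltP.
have hD : (1 <= D)%R by rewrite /D; have := leINR _ _ hd; rewrite /=.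
have hS : (1 <= Sr)%R by rewrite /Sr; have := leINR _ _ hs; rewrite /=.
have hV0 : (0 <= Vr)%R by apply: INR_ge0.
have he : (2 <= exp 1)%R by apply: exp1_ge2.
have hds : INR (d * s) = (D * Sr)%R by rewrite INR_muln.
have hDS : (0 <= eps * D * Sr)%R by apply: Rmult_le_pos; [apply: Rmult_le_pos|]; lra.
have hvds : (v < d * s)%N.
  apply/ltP; apply: INR_lt; rewrite hds -/Vr; nra.
set k := (d * s - v)%N.
have hk : (d * s = v + k)%N by rewrite /k; lia.
have hkr : INR k = (D * Sr - Vr)%R by rewrite /k INR_subn ?hds //; apply: ltnW.
have h1 : (INR 'C(m, s) <= INR m ^ s)%R by rewrite -INR_expn; apply: leINR; apply: bin_le_pow.
have h2 : (INR 'C(n, v) * INR v`! <= N ^ v)%R.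
  by rewrite -INR_muln /N -INR_expn; apply: leINR; apply: bin_fact_le.
have h3 := pow_fact_exp v.
have hA : (INR 'C(n, v) * (Vr / N) ^ v <= exp 1 ^ (d * s))%R.
  have e : ((Vr / N) ^ v = Vr ^ v * / N ^ v)%R.
    by rewrite /Rdiv Rpow_mult_distr pow_inv.
  rewrite e -Rmult_assoc.
  have hNv : (0 < N ^ v)%R by apply: pow_lt.
  apply: (Rmult_le_reg_r (N ^ v)) => //.
  rewrite Rmult_assoc Rinv_l; last by lra.
  rewrite Rmult_1_r.
  have hC : (0 <= INR 'C(n, v))%R by apply: INR_ge0.
  have hE : (exp Vr <= exp 1 ^ (d * s))%R.
    rewrite exp_pow hds; apply: exp_le; nra.
  apply: (Rle_trans _ (INR 'C(n, v) * (INR v`! * exp Vr))%R).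
    by apply: Rmult_le_compat_l.
  rewrite -Rmult_assoc.
  apply: (Rle_trans _ (N ^ v * exp Vr)%R).
    by apply: Rmult_le_compat_r => //; left; apply: exp_pos.
  rewrite [X in (_ <= X)%R]Rmult_comm; apply: Rmult_le_compat_l => //; left; exact: pow_lt.
have hL : (0 <= ln (exp 1 * D))%R.
  rewrite -ln_1; apply: ln_le'; [lra | nra].
have hC : ((Vr / N) ^ k <= z ^ (d * s))%R.
  have hz : (0 <= z ^ (d * s))%R by apply: pow_le; left; apply: exp_pos.
  case: (posnP v) => [v0 | vpos].
    have -> : Vr = 0%R by rewrite /Vr v0.
    rewrite Rdiv_0_l pow_i //; apply/ltP; lia.
  have hy : (Vr / N <= / (exp 1 * D))%R.
    apply: (Rmult_le_reg_r N) => //.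
    have -> : (Vr / N * N = Vr)%R by field; lra.
    have hsn' : (Sr * (exp 1 * D ^ 2) <= N)%R.
      have hpos : (0 < exp 1 * D ^ 2)%R by nra.
      have := Rmult_le_compat_r _ _ _ (Rlt_le _ _ hpos) hsn.
      have -> : (N / (exp 1 * D ^ 2) * (exp 1 * D ^ 2) = N)%R by field; nra.
      done.
    apply: (Rmult_le_reg_l (exp 1 * D)); first nra.
    rewrite -Rmult_assoc Rinv_r; last nra.
    nra.
  apply: (Rle_trans _ ((/ (exp 1 * D)) ^ k)%R).
    apply: pow_incr; split => //; apply: Rmult_le_pos => //; left; exact: Rinv_0_lt_compat.
  rewrite -(exp_ln (exp 1 * D)); last nra.
  rewrite -exp_Ropp /z !exp_pow hkr hds.
  apply: exp_le.
  nra.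
have eL : (INR 'C(m, s) * INR 'C(n, v) * (INR (4 * v) / N) ^ (d * s) =
  INR 'C(m, s) * (INR 'C(n, v) * (Vr / N) ^ v) * (4 ^ (d * s) * (Vr / N) ^ k))%R.
  have -> : INR (4 * v) = (4 * Vr)%R by rewrite INR_muln /Vr /=; ring.
  have -> : ((4 * Vr / N) = 4 * (Vr / N))%R by rewrite /Rdiv; ring.
  rewrite Rpow_mult_distr {2}hk powD; ring.
have eR : ((INR m * (4 * exp 1) ^ d * z ^ d) ^ s =
  INR m ^ s * exp 1 ^ (d * s) * (4 ^ (d * s) * z ^ (d * s)))%R.
  rewrite !Rpow_mult_distr !powM; ring.
rewrite eL eR.
have hp1 : (0 <= INR 'C(m, s))%R by apply: INR_ge0.
have hp2 : (0 <= INR 'C(n, v) * (Vr / N) ^ v)%R.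
  apply: Rmult_le_pos; first exact: INR_ge0.
  apply: pow_le; apply: Rmult_le_pos => //; left; exact: Rinv_0_lt_compat.
have hp4 : (0 <= (Vr / N) ^ k)%R.
  apply: pow_le; apply: Rmult_le_pos => //; left; exact: Rinv_0_lt_compat.
have hp3 : (0 < 4 ^ (d * s))%R by apply: pow_lt; lra.
apply: Rmult_le_compat.
- by apply: Rmult_le_pos.
- by apply: Rmult_le_pos => //; lra.
- by apply: Rmult_le_compat.
- apply: Rmult_le_compat_l; lra.
Qed.

Lemma n_le_n4 n : n <= n ^ 4.
Proof.
case: n => [|n] //; rewrite -[X in X <= _]expn1; apply: leq_pexp2l => //.
Qed.

Lemma dd_bounds n : 0 < n -> 2 ^ dd n <= n ^ 4 /\ n ^ 4 < 2 ^ (dd n).+1.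
Proof.
move=> hn; split; first by apply: trunc_logP => //; rewrite expn_gt0 hn.
exact: trunc_log_ltn.
Qed.

Lemma dd_ge n D : 2 ^ D <= n -> D <= dd n.
Proof. move=> h; apply: trunc_log_max => //; exact: leq_trans h (n_le_n4 n). Qed.

Lemma aux_pow k : 6 <= k -> 8 * k + 6 <= 2 ^ k.
Proof.
move=> hk; have [j ->] : exists j, k = j + 6 by exists (k - 6); lia.
elim: j => [|j IH]; first by [].
rewrite addSn expnS.
have : 8 <= 2 ^ (j + 6) by rewrite (leq_trans _ IH) //; lia.
lia.
Qed.

Lemma dd_small n : 64 <= n -> 2 * dd n <= n.
Proof.
move=> hn.
set k := trunc_log 2 n.
have hk1 : 2 ^ k <= n by apply: trunc_logP => //; lia.
have hk2 : n < 2 ^ k.+1 by apply: trunc_log_ltn.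
have hk6 : 6 <= k by apply: trunc_log_max => //.
have [h1 _] := dd_bounds n (leq_trans (isT : 0 < 64) hn).
have h3 : n ^ 4 < 2 ^ (k.+1 * 4) by rewrite expnM ltn_exp2r.
have h4 : dd n < k.+1 * 4.
  by rewrite -(ltn_exp2l _ _ (isT : 1 < 2)); apply: leq_ltn_trans h1 h3.
have := aux_pow _ hk6; lia.
Qed.

Lemma final_bound eps n d : (0 < eps)%R -> 0 < n -> 0 < d ->
  2 ^ d <= n ^ 4 -> n ^ 4 < 2 ^ d.+1 ->
  (8 <= eps * ln (exp 1 * INR d))%R ->
  (2 * INR n.+1 * (INR (n ^ 2 * 2 ^ d) * (4 * exp 1) ^ d *
     exp (- (eps * ln (exp 1 * INR d))) ^ d) <= 16 * exp (- INR d))%R.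
Proof.
move=> heps hn hd h1 h2 h8.
set z := exp (- (eps * ln (exp 1 * INR d))).
have hnat : 2 * n.+1 * (n ^ 2 * 2 ^ d) <= 16 * 8 ^ d.
  set b := 2 ^ d.
  have e8 : 8 ^ d = b ^ 3 by rewrite /b -expnM mulnC expnM.
  rewrite e8.
  have hn4 : n ^ 4 <= 2 * b.
    move: h2; rewrite (expnS 2 d) -/b; move: (n ^ 4) => a; lia.
  have ha : n.+1 <= 4 * b by have := n_le_n4 n; lia.
  have hq : n ^ 2 <= 2 * b.
    by apply: leq_trans hn4; apply: leq_pexp2l.
  apply: (leq_trans (leq_mul (leq_mul (leqnn 2) ha) (leq_mul hq (leqnn b)))).
  have -> : b ^ 3 = b * b * b by rewrite !expnS expn0 muln1 mulnA.
  lia.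
have hX := leINR _ _ hnat.
have h2R : INR 2 = 2%R by simpl; lra.
have h16 : INR 16 = 16%R by simpl; lra.
have h8R : INR 8 = 8%R by simpl; lra.
have hz0 : (0 <= z)%R by left; apply: exp_pos.
have hA : (0 <= (4 * exp 1) ^ d * z ^ d)%R.
  apply: Rmult_le_pos; apply: pow_le => //; have := exp_pos 1; lra.
have eL : (2 * INR n.+1 * (INR (n ^ 2 * 2 ^ d) * (4 * exp 1) ^ d * z ^ d) =
   INR (2 * n.+1 * (n ^ 2 * 2 ^ d)) * ((4 * exp 1) ^ d * z ^ d))%R.
  rewrite !INR_muln h2R; ring.
rewrite eL.
apply: (Rle_trans _ (INR (16 * 8 ^ d) * ((4 * exp 1) ^ d * z ^ d))%R).
  exact: Rmult_le_compat_r.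
have eR : (INR (16 * 8 ^ d) * ((4 * exp 1) ^ d * z ^ d) = 16 * (32 * exp 1 * z) ^ d)%R.
  have -> : (32 = 8 * 4)%R by lra.
  rewrite INR_muln INR_expn h16 h8R !Rpow_mult_distr.
  ring.
rewrite eR.
apply: Rmult_le_compat_l; first lra.
have -> : exp (- INR d) = ((exp (-1)) ^ d)%R by rewrite exp_pow; congr exp; ring.
apply: pow_incr; split.
  apply: Rmult_le_pos => //; have := exp_pos 1; lra.
have hz8 : (z <= exp (-8))%R by apply: exp_le; lra.
have e7 : (exp 1 * exp (-8) = exp (-7))%R by rewrite -exp_plus; congr exp; lra.
have e6 : (exp (-1) = exp 6 * exp (-7))%R by rewrite -exp_plus; congr exp; lra.
have h6 : (64 <= exp 6)%R.
  have -> : exp 6 = ((exp 1) ^ 6)%R by rewrite exp_pow; congr exp; simpl; lra.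
  have := pow_incr 2 (exp 1) 6 (conj (ltac:(lra) : (0 <= 2)%R) exp1_ge2).
  simpl; lra.
have h7 : (0 < exp (-7))%R by apply: exp_pos.
have he : (0 < exp 1)%R by apply: exp_pos.
rewrite e6.
apply: (Rle_trans _ (32 * exp 1 * exp (-8))%R).
  apply: Rmult_le_compat_l => //; lra.
rewrite Rmult_assoc e7; nra.
Qed.

Lemma pbE (P : Prop) : pb P = true <-> P.
Proof. rewrite /pb; case: excluded_middle_informative => h; split => //. Qed.

Lemma card_bigcup_le (T : finType) (I : Type) r (P : pred I) (F : I -> {set T}) :
  #|\bigcup_(i <- r | P i) F i| <= \sum_(i <- r | P i) #|F i|.
Proof.
apply: (big_ind2 (fun (A : {set T}) k => #|A| <= k)); first by rewrite cards0.
  move=> A a B b hA hB; apply: leq_trans (leq_card_setU A B).1 _; exact: leq_add.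
by move=> i _.
Qed.

Section Main.
Variables (eps : R) (n d m : nat).

Definition Eset : {set {ffun 'I_m -> {set lit n}}} :=
  [set F | pb (expanding eps d F)].
Definition Ps (s : nat) := pb (INR s <= INR n / (exp 1 * INR d ^ 2))%R.
Definition Qs (s v : nat) := pb (INR v < (1 - eps) * INR d * INR s)%R.
Definition Sset (s : nat) := [set S : {set 'I_m} | #|S| == s].
Definition Vset (v : nat) := [set V : {set 'I_n} | #|V| == v].

Lemma bad_sub :
  formulas m n d :\: Eset \subset
  \bigcup_(s < m.+1 | Ps s) \bigcup_(v < n.+1 | Qs s v)
     \bigcup_(S in Sset s) \bigcup_(V in Vset v) AS (n:=n) (d:=d) S V.
Proof.
apply/subsetP => F; rewrite in_setD => /andP[hnE hF].
have nexp : ~ expanding eps d F.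
  move=> h; move: hnE; rewrite inE; have -> : pb (expanding eps d F) = true by apply/pbE.
  by [].
have [S hS] := not_all_ex_not _ _ nexp.
have [hs hv] := imply_to_and _ _ hS.
have hv' := Rnot_le_lt _ _ hv.
have hSm : #|S| < m.+1 by rewrite ltnS; apply: leq_trans (max_card _) _; rewrite card_ord.
have hVn : #|vars F S| < n.+1 by rewrite ltnS; apply: leq_trans (max_card _) _; rewrite card_ord.
apply/bigcupP; exists (inord #|S|); first by rewrite /Ps inordK //; apply/pbE.
apply/bigcupP; exists (inord #|vars F S|).
  rewrite /Qs !inordK //; apply/pbE; lra.
apply/bigcupP; exists S; first by rewrite inE inordK.
apply/bigcupP; exists (vars F S); first by rewrite inE inordK.
rewrite inE; apply/forallP => i; move: hF; rewrite inE => /forallP hF.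
case: ifP => hi; rewrite inE ?hF //=.
apply/subsetP => x /imsetP[l hl ->]; apply/imsetP; exists l => //.
by apply/bigcupP; exists i.
Qed.

End Main.

Lemma sum_AS_bound n d m s v : 2 * d <= n ->
  (\sum_(S in Sset m s) \sum_(V in Vset n v) #|AS (n:=n) (d:=d) S V|) * n ^ (d * s)
   <= 'C(m, s) * 'C(n, v) * (#|formulas m n d| * (4 * v) ^ (d * s)).
Proof.
move=> h.
rewrite big_distrl /=.
apply: (@leq_trans (\sum_(S in Sset m s) \sum_(V in Vset n v) (#|formulas m n d| * (4 * v) ^ (d * s)))).
  apply: leq_sum => S hS; rewrite big_distrl /=; apply: leq_sum => V hV.
  move: hS hV; rewrite !inE => /eqP <- /eqP <-; exact: card_AS_bound.
by rewrite !sum_nat_const /Sset /Vset !card_draws !card_ord mulnA.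
Qed.

Lemma term_real eps n d m s v : (0 < eps)%R -> 0 < n -> 0 < d -> 2 * d <= n ->
  Ps n d s -> Qs eps d s v ->
  (INR (\sum_(S in Sset m s) \sum_(V in Vset n v) #|AS (n:=n) (d:=d) S V|) <=
   INR #|formulas m n d| *
   (if s == 0%N then 0 else (INR m * (4 * exp 1) ^ d * exp (- (eps * ln (exp 1 * INR d))) ^ d) ^ s))%R.
Proof.
move=> heps hn hd h2d /pbE hPs /pbE hQs.
case: (posnP s) => [s0 | spos].
  by exfalso; move: hQs; rewrite s0 /= Rmult_0_r; have := pos_INR v; lra.
set X := \sum_(S in Sset m s) _.
have hN : (0 < INR n)%R by apply: lt_0_INR; apply/ltP.
have hNp : (0 < INR n ^ (d * s))%R by apply: pow_lt.
have hnat := leINR _ _ (sum_AS_bound n d m s v h2d).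
rewrite -/X !INR_muln !INR_expn in hnat.
have ht := @term_bound eps n d m s v heps hn hd spos hQs hPs.
apply: (Rmult_le_reg_r _ _ _ hNp).
apply: (Rle_trans _ _ _ hnat).
have hF : (0 <= INR #|formulas m n d|)%R by apply: pos_INR.
have e : (INR (4 * v) ^ (d * s) = (INR (4 * v) / INR n) ^ (d * s) * INR n ^ (d * s))%R.
  rewrite -Rpow_mult_distr; f_equal; field; lra.
rewrite e.
have := Rmult_le_compat_l _ _ _ hF ht.
have := Rmult_le_compat_r _ _ _ (Rlt_le _ _ hNp) (Rmult_le_compat_l _ _ _ hF ht).
move=> H _; apply: Rle_trans H; right; ring.
Qed.

Definition xval eps d m :=
  (INR m * (4 * exp 1) ^ d * exp (- (eps * ln (exp 1 * INR d))) ^ d)%R.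

Lemma bad_card eps n d m : (0 < eps)%R -> 0 < n -> 0 < d -> 2 * d <= n ->
  (0 <= xval eps d m)%R -> (xval eps d m <= 1/2)%R ->
  (INR #|formulas m n d :\: Eset eps n d m| <=
   INR #|formulas m n d| * (INR n.+1 * (2 * xval eps d m)))%R.
Proof.
move=> heps hn hd h2d hx0 hx1.
set x := xval eps d m.
set g := fun s : nat => (if s == 0%N then 0 else x ^ s)%R.
have hg : forall s, (0 <= g s)%R.
  by move=> s; rewrite /g; case: (s == 0%N); [lra | apply: pow_le].
have hF : (0 <= INR #|formulas m n d|)%R by apply: pos_INR.
have h1 := subset_leq_card (bad_sub eps n d m).
have h3 : #|formulas m n d :\: Eset eps n d m| <=
   \sum_(s < m.+1 | Ps n d s) \sum_(v < n.+1 | Qs eps d s v)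
     \sum_(S in Sset m s) \sum_(V in Vset n v) #|AS (n:=n) (d:=d) S V|.
  apply: leq_trans h1 _; apply: leq_trans (card_bigcup_le _ _ _ _ _) _.
  apply: leq_sum => s _; apply: leq_trans (card_bigcup_le _ _ _ _ _) _.
  apply: leq_sum => v _; apply: leq_trans (card_bigcup_le _ _ _ _ _) _.
  apply: leq_sum => S _; exact: card_bigcup_le.
apply: Rle_trans (leINR _ _ h3) _.
rewrite INR_sum.
apply: (Rle_trans _ (\big[Rplus/R0]_(s < m.+1 | Ps n d s) (INR n.+1 * (INR #|formulas m n d| * g s)))%R).
  apply: Rsum_le => s hs; rewrite INR_sum.
  apply: (Rle_trans _ (\big[Rplus/R0]_(v < n.+1 | Qs eps d s v) (INR #|formulas m n d| * g s))%R).
    apply: Rsum_le => v hv; exact: term_real.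
  apply: (Rle_trans _ (\big[Rplus/R0]_(v < n.+1) (INR #|formulas m n d| * g s))%R).
    apply: Rsum_cond_le => v; exact: Rmult_le_pos.
  rewrite Rsum_const; right; done.
apply: (Rle_trans _ (\big[Rplus/R0]_(s < m.+1) (INR n.+1 * (INR #|formulas m n d| * g s)))%R).
  apply: Rsum_cond_le => s; apply: Rmult_le_pos; [apply: pos_INR | exact: (Rmult_le_pos _ _ hF (hg s))].
apply: (Rle_trans _ (INR n.+1 * INR #|formulas m n d| * \big[Rplus/R0]_(s < m.+1) g s)%R).
  right; rewrite -Rsum_scal; apply: eq_bigr => s _; ring.
have := geom_bound x m.+1 hx0 hx1.
have hN : (0 <= INR n.+1)%R by apply: pos_INR.
move=> hgeom.
have : (INR n.+1 * INR #|formulas m n d| * \big[Rplus/R0]_(s < m.+1) g s <=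
        INR n.+1 * INR #|formulas m n d| * (2 * x))%R.
  apply: Rmult_le_compat_l; first exact: Rmult_le_pos.
  exact: hgeom.
move=> H; apply: Rle_trans H _; right; ring.
Qed.

Theorem mainTheorem7 :
  forall eps : R, Rlt 0 eps -> Rlt eps 1 ->
  forall delta : R, Rlt 0 delta ->
  exists N : nat, forall n : nat, (N <= n)%nat ->
    Rle (Rminus 1 delta) (prob_expanding eps (mm n) n (dd n)).
Proof.
move=> eps heps heps1 delta hdelta.
have [D0 hD0] := INR_unbounded (exp (8 / eps)).
have [D1 hD1] := INR_unbounded (ln (16 / delta)).
have [D2 hD2] := INR_unbounded (ln 32).
set D := (D0 + D1 + D2).+1.
have hDi : forall k, (D <= k)%N -> (exp (8 / eps) < INR k /\ ln (16 / delta) < INR k /\ ln 32 < INR k)%R.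
  move=> k hk.
  have h0 := leINR D0 k ltac:(lia).
  have h1 := leINR D1 k ltac:(lia).
  have h2 := leINR D2 k ltac:(lia).
  lra.
exists (2 ^ D + 64) => n hn.
have hn64 : (64 <= n)%N by lia.
have hn0 : (0 < n)%N by lia.
have hnD : (2 ^ D <= n)%N by lia.
set d := dd n.
have hdD : (D <= d)%N by apply: dd_ge.
have hd0 : (0 < d)%N by lia.
have [h1 h2] := dd_bounds n hn0.
have h2d : (2 * d <= n)%N by apply: dd_small.
have [hE [hL1 hL2]] := hDi d hdD.
have hdpos : (0 < INR d)%R by apply: lt_0_INR; apply/ltP.
have h8 : (8 <= eps * ln (exp 1 * INR d))%R.
  rewrite ln_mult ?ln_exp; [|apply: exp_pos|done].
  have : (ln (exp (8 / eps)) < ln (INR d))%R by apply: ln_increasing => //; apply: exp_pos.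
  rewrite ln_exp => h.
  have : (8 = eps * (8 / eps))%R by field; lra.
  nra.
have hfin := @final_bound eps n d heps hn0 hd0 h1 h2 h8.
have he1 : (16 * exp (- INR d) <= delta)%R.
  have : (exp (- INR d) <= exp (- ln (16 / delta)))%R by apply: exp_le; lra.
  rewrite [exp (- ln _)]exp_Ropp exp_ln; last by apply: Rdiv_lt_0_compat; lra.
  have -> : (/ (16 / delta) = delta / 16)%R by field; lra.
  lra.
have he2 : (16 * exp (- INR d) <= 1 / 2)%R.
  have : (exp (- INR d) <= exp (- ln 32))%R by apply: exp_le; lra.
  rewrite [exp (- ln _)]exp_Ropp exp_ln; last by lra.
  lra.
set x := xval eps d (mm n).
have hxdef : x = (INR (n ^ 2 * 2 ^ d) * (4 * exp 1) ^ d * exp (- (eps * ln (exp 1 * INR d))) ^ d)%R by [].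
have hx0 : (0 <= x)%R.
  rewrite hxdef; apply: Rmult_le_pos; [apply: Rmult_le_pos|]; try apply: pow_le.
  - exact: pos_INR.
  - have := exp_pos 1; lra.
  - left; exact: exp_pos.
have hn1 : (1 <= INR n.+1)%R by have := leINR 1 n.+1 isT; rewrite /=.
rewrite -hxdef in hfin.
have hx1 : (x <= 1 / 2)%R by nra.
have hbad := @bad_card eps n d (mm n) heps hn0 hd0 h2d hx0 hx1.
rewrite /prob_expanding.
set Fm := formulas (mm n) n d.
have hK : (0 < #|cl n d|)%N by apply: leq_trans (card_cl_ge n d); rewrite bin_gt0; lia.
have hFpos : (0 < INR #|Fm|)%R.
  apply: lt_0_INR; apply/ltP; rewrite /Fm card_formulas expn_gt0 hK //.
have eG : [set F in Fm | pb (expanding eps d F)] = Fm :&: Eset eps n d (mm n).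
  by apply/setP => F; rewrite !inE.
rewrite eG.
have hsum := cardsID (Eset eps n d (mm n)) Fm.
have eI : INR #|Fm :&: Eset eps n d (mm n)| = (INR #|Fm| - INR #|Fm :\: Eset eps n d (mm n)|)%R.
  by rewrite -hsum INR_addn; ring.
rewrite eI.
have hB : (INR #|Fm :\: Eset eps n d (mm n)| <= INR #|Fm| * delta)%R.
  apply: Rle_trans hbad _.
  apply: Rmult_le_compat_l; first exact: pos_INR.
  rewrite -/x; nra.
apply: (Rmult_le_reg_r (INR #|Fm|)) => //.
have -> : ((INR #|Fm| - INR #|Fm :\: Eset eps n d (mm n)|) / INR #|Fm| * INR #|Fm| =
           INR #|Fm| - INR #|Fm :\: Eset eps n d (mm n)|)%R by field; lra.
nra.
Qed.
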